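(* For every measurement assemblage $\vec B$ on $\mathcal H$, $$\mathbb{IR}^{\rm JM}(\vec B)=\max_{\rho_B}\mathbb{SR}^{\rm C\text{-}LHS}\big(\rho_B^{1/2}\vec B\rho_B^{1/2}\big),$$ where the maximum is over density operators $\rho_B$ on $\mathcal H$. Moreover, every full-rank density operator $\rho_B$ attains the maximum.
   Context: All Hilbert spaces are finite-dimensional. A measurement assemblage (MA) on $\mathcal H$ is a family $\vec M=\{M_{a|x}\}_{a,x}$, with $x$ ranging over a finite input set and $a$ over a finite outcome set $\mathcal A$, such that for each $x$, $\{M_{a|x}\}_a$ is a POVM. $\vec M$ is jointly measurable, written $\vec M\in\mathbb{JM}$, if there exist a finite POVM $\{G_\lambda\}_\lambda$ and conditional probability distributions $p(a|x,\lambda)$ with $M_{a|x}=\sum_\lambda p(a|x,\lambda)G_\lambda$ for all $a,x$. A state assemblage (SA) on $\mathcal H$ is a family $\vec\sigma=\{\sigma_{a|x}\}_{a,x}$ of positive semidefinite operators such that $\sum_a\sigma_{a|x}=\rho$ is independent of $x$ and $\mathrm{tr}\rho=1$; $\rho$ is called its reduced state. $\vec\sigma$ admits a local hidden state model, written $\vec\sigma\in\mathbb{LHS}$, if $\sigma_{a|x}=\sum_\lambda p(\lambda)p(a|x,\lambda)\rho_\lambda$ for some finite probability distribution $p(\lambda)$, conditional distributions $p(a|x,\lambda)$ and density operators $\rho_\lambda$. JM incompatibility robustness: $\mathbb{IR}^{\rm JM}(\vec M)=\min\{t\ge0:\exists\ \vec D',\vec D\in\mathbb{JM}$ with $(M_{a|x}+tD'_{a|x})/(1+t)=D_{a|x}\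 \forall a,x\}$. Consistent LHS steering robustness of an SA $\vec\sigma$ with reduced state $\rho$: $\mathbb{SR}^{\rm C\text{-}LHS}(\vec\sigma)=\min\{t\ge0:\exists\ \vec\tau',\vec\tau\in\mathbb{LHS}$, both with reduced state $\rho$, with $(\sigma_{a|x}+t\tau'_{a|x})/(1+t)=\tau_{a|x}\ \forall a,x\}$. For a density operator $\rho$ and an MA $\vec B$, $\rho^{1/2}\vec B\rho^{1/2}$ denotes the SA $\{\rho^{1/2}B_{a|x}\rho^{1/2}\}_{a,x}$, with reduced state $\rho$. *)

(* Defs.v *)
From mathcomp Require Import all_boot all_order all_algebra.
From mathcomp Require Import complex.
From mathcomp Require Import reals boolp.
Set Implicit Arguments.
Unset Strict Implicit.
Unset Printing Implicit Defensive.
Import GRing.Theory Num.Theory.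
Local Open Scope ring_scope.
Local Open Scope complex_scope.

Section QDefs.
Variable R : realType.
Local Notation C := R[i].

Definition adjm (m n : nat) (M : 'M[C]_(m, n)) : 'M[C]_(n, m) :=
  map_mx Num.conj (M^T).

Definition psd (n : nat) (M : 'M[C]_n) : Prop :=
  adjm M = M /\ forall v : 'cV[C]_n, 0 <= (adjm v *m M *m v) 0 0.

Definition density (n : nat) (rho : 'M[C]_n) : Prop :=
  psd rho /\ \tr rho = 1.

(* the (unique) positive semidefinite square root rho^{1/2}, chosen classically *)
Definition psd_sqrt (n : nat) (rho : 'M[C]_n) : 'M[C]_n :=
  match pselect (exists S : 'M[C]_n, psd S /\ S *m S = rho) with
  | left h => proj1_sig (cid h)
  | right _ => 0
  end.

Definition cond_prob (X L A : finType) (p : X -> L -> A -> R) : Prop :=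
  (forall x l a, 0 <= p x l a) /\ (forall x l, \sum_(a : A) p x l a = 1).

(* measurement assemblage: M x a is M_{a|x} *)
Definition is_MA (n : nat) (X A : finType) (M : X -> A -> 'M[C]_n) : Prop :=
  (forall x a, psd (M x a)) /\ (forall x, \sum_(a : A) M x a = 1%:M).

(* jointly measurable MA (finite parent POVM indexed by 'I_k) *)
Definition is_JM (n : nat) (X A : finType) (M : X -> A -> 'M[C]_n) : Prop :=
  is_MA M /\
  exists (k : nat) (G : 'I_k -> 'M[C]_n) (p : X -> 'I_k -> A -> R),
    (forall l, psd (G l)) /\ \sum_(l < k) G l = 1%:M /\ cond_prob p /\
    forall x a, M x a = \sum_(l < k) (p x l a)%:C *: G l.

(* state assemblage with reduced state rho: sig x a is sigma_{a|x} *)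
Definition is_SA (n : nat) (X A : finType) (sig : X -> A -> 'M[C]_n)
    (rho : 'M[C]_n) : Prop :=
  (forall x a, psd (sig x a)) /\ (forall x, \sum_(a : A) sig x a = rho) /\
  \tr rho = 1.

Definition is_LHS (n : nat) (X A : finType) (sig : X -> A -> 'M[C]_n)
    (rho : 'M[C]_n) : Prop :=
  is_SA sig rho /\
  exists (k : nat) (q : 'I_k -> R) (p : X -> 'I_k -> A -> R)
         (rl : 'I_k -> 'M[C]_n),
    (forall l, 0 <= q l) /\ \sum_(l < k) q l = 1 /\ cond_prob p /\
    (forall l, density (rl l)) /\
    forall x a, sig x a = \sum_(l < k) (q l * p x l a)%:C *: rl l.

(* JM incompatibility robustness (the minimum, taken as the infimum) *)
Definition IR_JM (n : nat) (X A : finType) (M : X -> A -> 'M[C]_n) : R :=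
  inf (fun t : R => 0 <= t /\
    exists D' D : X -> A -> 'M[C]_n, is_JM D' /\ is_JM D /\
      forall x a, ((1 + t)^-1)%:C *: (M x a + t%:C *: D' x a) = D x a).

Definition SR_CLHS (n : nat) (X A : finType) (sig : X -> A -> 'M[C]_n)
    (rho : 'M[C]_n) : R :=
  inf (fun t : R => 0 <= t /\
    exists tau' tau : X -> A -> 'M[C]_n, is_LHS tau' rho /\ is_LHS tau rho /\
      forall x a, ((1 + t)^-1)%:C *: (sig x a + t%:C *: tau' x a) = tau x a).

Definition sandwich (n : nat) (X A : finType) (rho : 'M[C]_n)
    (B : X -> A -> 'M[C]_n) : X -> A -> 'M[C]_n :=
  fun x a => psd_sqrt rho *m B x a *m psd_sqrt rho.

End QDefs.

(* Main.v *)
Require Import Defs.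
From mathcomp Require Import all_boot all_order all_algebra.
From mathcomp Require Import complex spectral sesquilinear.
From mathcomp Require Import reals boolp.
Import GRing.Theory Num.Theory.
Set Implicit Arguments.
Unset Strict Implicit.
Unset Printing Implicit Defensive.
Local Open Scope ring_scope.
Local Open Scope complex_scope.

Section Q.
Variable R : realType.
Local Notation C := R[i].
Local Notation cj := (@Num.conj C).

Lemma adjm_mul m n p (A : 'M[C]_(m,n)) (B : 'M_(n,p)) :
  adjm (A *m B) = adjm B *m adjm A.
Proof. by rewrite /adjm trmx_mul map_mxM. Qed.

Lemma adjmK m n (A : 'M[C]_(m,n)) : adjm (adjm A) = A.
Proof. by apply/matrixP => i j; rewrite !mxE conjCK. Qed.

Lemma adjmD m n (A B : 'M[C]_(m,n)) : adjm (A + B) = adjm A + adjm B.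
Proof. by apply/matrixP => i j; rewrite !mxE rmorphD. Qed.

Lemma adjm0 m n : adjm (0 : 'M[C]_(m,n)) = 0.
Proof. by apply/matrixP => i j; rewrite !mxE rmorph0. Qed.

Lemma adjmZ m n c (A : 'M[C]_(m,n)) : adjm (c *: A) = cj c *: adjm A.
Proof. by apply/matrixP => i j; rewrite !mxE rmorphM. Qed.

Lemma conj_realC (c : R) : cj c%:C = c%:C.
Proof. exact: conjc_real. Qed.

Lemma adjm1 n : adjm (1%:M : 'M[C]_n) = 1%:M.
Proof. by apply/matrixP => i j; rewrite /adjm !mxE (rmorph_nat cj) eq_sym. Qed.

Lemma adjm_sum m n (I : Type) (r : seq I) (P : pred I) (F : I -> 'M[C]_(m,n)) :
  adjm (\sum_(i <- r | P i) F i) = \sum_(i <- r | P i) adjm (F i).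
Proof. exact: (big_morph _ (@adjmD m n) (@adjm0 m n)). Qed.

Lemma adjm_inv n (A : 'M[C]_n) : adjm (invmx A) = invmx (adjm A).
Proof. by rewrite /adjm trmx_inv map_invmx. Qed.

Lemma adjm_unitary n (P : 'M[C]_n) : adjm P = (P ^t Num.conj)%sesqui.
Proof. by []. Qed.

Lemma cV_ge0 n (w : 'cV[C]_n) : 0 <= (adjm w *m w) 0 0.
Proof.
rewrite !mxE; apply: sumr_ge0 => j _; rewrite !mxE mulrC; exact: mul_conjC_ge0.
Qed.

Lemma psd_AA m n (T : 'M[C]_(m,n)) : psd (adjm T *m T).
Proof.
split; first by rewrite adjm_mul adjmK.
move=> v; rewrite mulmxA -mulmxA -adjm_mul; exact: cV_ge0.
Qed.

Lemma psd_herm n (M : 'M[C]_n) : psd M -> adjm M = M.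
Proof. by case. Qed.

Lemma psd_congr n m (M : 'M[C]_n) (S : 'M[C]_(n,m)) : psd M -> psd (adjm S *m M *m S).
Proof.
case=> hM qM; split; first by rewrite !adjm_mul adjmK hM mulmxA.
move=> v; have := qM (S *m v).
by rewrite adjm_mul !mulmxA.
Qed.

Lemma psd0 n : psd (0 : 'M[C]_n).
Proof. by split; [rewrite adjm0|move=> v; rewrite mulmx0 mul0mx mxE]. Qed.

Lemma psdD n (M N : 'M[C]_n) : psd M -> psd N -> psd (M + N).
Proof.
case=> hM qM [hN qN]; split; first by rewrite adjmD hM hN.
move=> v; rewrite mulmxDr mulmxDl mxE; exact: addr_ge0.
Qed.

Lemma psd_sum n (I : Type) (r : seq I) (P : pred I) (F : I -> 'M[C]_n) :
  (forall i, P i -> psd (F i)) -> psd (\sum_(i <- r | P i) F i).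
Proof.
move=> h; elim/big_rec: _ => [|i x Pi hx]; first exact: psd0.
exact: psdD (h i Pi) hx.
Qed.

Lemma psdZ n (c : R) (M : 'M[C]_n) : 0 <= c -> psd M -> psd (c%:C *: M).
Proof.
move=> c0 [hM qM]; split; first by rewrite adjmZ conj_realC hM.
move=> v; rewrite -scalemxAr -scalemxAl mxE; apply: mulr_ge0 => //.
by rewrite ler0c.
Qed.

Lemma tr_AA m n (T : 'M[C]_(m,n)) :
  \tr (adjm T *m T) = \sum_i \sum_j cj (T j i) * T j i.
Proof. by apply: eq_bigr => i _; rewrite mxE; apply: eq_bigr => j _; rewrite !mxE. Qed.


Lemma nonneg_Re (x : C) : 0 <= x -> x = (complex.Re x)%:C /\ 0 <= complex.Re x.
Proof. by case: x => a b; rewrite lecE /= => /andP[/eqP -> a0]. Qed.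

Lemma mulmx_unitaryK m n (A : 'M[C]_(m,n)) (P : 'M[C]_n) :
  P \is unitarymx -> A *m P *m adjm P = A.
Proof. move=> Pu; exact: (mulmxtVK A Pu). Qed.

Lemma adjm_delta n (j : 'I_n) : adjm (delta_mx j (0 : 'I_1) : 'cV[C]_n) = delta_mx 0 j.
Proof. by apply/matrixP => a b; rewrite !mxE (rmorph_nat cj) andbC. Qed.

Lemma delta_diag n (j : 'I_n) (d : 'rV[C]_n) :
  (adjm (delta_mx j (0 : 'I_1)) *m diag_mx d *m (delta_mx j (0 : 'I_1) : 'cV_n)) 0 0 = d 0 j.
Proof.
rewrite adjm_delta -colE mxE mul_mx_diag mxE.
by rewrite mxE !eqxx mul1r.
Qed.

Lemma adjm_diag_nonneg n (r : 'rV[C]_n) : (forall j, 0 <= r 0 j) ->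
  adjm (diag_mx r) = diag_mx r.
Proof.
move=> h; apply/matrixP => a b; rewrite !mxE rmorphMn eq_sym.
case: (eqVneq b a) => [->|_]; last by rewrite !mulr0n.
by congr (_ *+ _); apply: conj_Creal; exact: ger0_real.
Qed.

Lemma psd_sqrt_ex n (M : 'M[C]_n) : psd M -> exists S, psd S /\ S *m S = M.
Proof.
case=> hM qM.
have herm : M \is hermsymmx.
  by rewrite is_hermitianmxE expr0 scale1r; apply/eqP; rewrite -[LHS]hM.
have /orthomx_spectralP eM := hermitian_normalmx herm.
set P := spectralmx M in eM; set d := spectral_diag M in eM.
have Pu : P \is unitarymx := spectral_unitarymx M.
have iP : invmx P = adjm P := invmx_unitary Pu.
rewrite iP in eM.
have d0 : forall j, 0 <= d 0 j.
  move=> j; have := qM (adjm P *m (delta_mx j (0 : 'I_1) : 'cV_n)).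
  rewrite eM adjm_mul adjmK !mulmxA !mulmx_unitaryK //.
  by rewrite delta_diag.
set r := \row_j sqrtC (sqrtC (d 0 j)).
set s := \row_j sqrtC (d 0 j).
have r0 : forall j, 0 <= r 0 j by move=> j; rewrite mxE !sqrtC_ge0.
have err : diag_mx r *m diag_mx r = diag_mx s.
  by rewrite mulmx_diag; congr diag_mx; apply/rowP => j; rewrite !mxE -expr2 sqrtCK.
have ess : diag_mx s *m diag_mx s = diag_mx d.
  by rewrite mulmx_diag; congr diag_mx; apply/rowP => j; rewrite !mxE -expr2 sqrtCK.
exists (adjm (diag_mx r *m P) *m (diag_mx r *m P)); split; first exact: psd_AA.
rewrite adjm_mul adjm_diag_nonneg // !mulmxA -(mulmxA (adjm P) (diag_mx r)) err.
rewrite mulmx_unitaryK // -(mulmxA (adjm P *m diag_mx s)) err.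
rewrite -(mulmxA (adjm P)) ess.
by rewrite eM.
Qed.


Lemma psd_sqrt_spec n (M : 'M[C]_n) :
  psd M -> psd (psd_sqrt M) /\ psd_sqrt M *m psd_sqrt M = M.
Proof.
move=> h; rewrite /psd_sqrt; case: pselect => [e|nex].
  exact: (proj2_sig (cid e)).
by exfalso; apply: nex; exact: psd_sqrt_ex.
Qed.

Lemma psd_tr n (M : 'M[C]_n) : psd M -> 0 <= \tr M /\ (\tr M = 0 -> M = 0).
Proof.
move=> h; have [hS eS] := psd_sqrt_spec h; set S := psd_sqrt M in hS eS.
have eM : M = adjm S *m S by rewrite psd_herm.
have t0 : forall i j, 0 <= cj (S j i) * S j i by move=> i j; rewrite mulrC mul_conjC_ge0.
rewrite eM tr_AA; split.
  by apply: sumr_ge0 => i _; apply: sumr_ge0 => j _.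
move=> /psumr_eq0P h0.
have S0 : S = 0.
  apply/matrixP => j i; rewrite mxE.
  have h1 : forall i, true -> 0 <= \sum_j cj (S j i) * S j i.
    by move=> i' _; apply: sumr_ge0 => j' _.
  have := @psumr_eq0P _ _ xpredT (fun j => cj (S j i) * S j i) (fun j _ => t0 i j) (h0 h1 i isT) j isT.
  move=> /eqP.
  by rewrite mulrC mul_conjC_eq0 => /eqP.
by rewrite S0 mulmx0.
Qed.

Lemma nonneg_tr n (M : 'M[C]_n) : psd M ->
  \tr M = (complex.Re (\tr M))%:C /\ 0 <= complex.Re (\tr M).
Proof. by move=> /psd_tr [/nonneg_Re]. Qed.



Lemma sandwich_sum n k (c : 'I_k -> C) (M : 'I_k -> 'M[C]_n) (S T : 'M[C]_n) :
  S *m (\sum_l c l *: M l) *m T = \sum_l c l *: (S *m M l *m T).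
Proof.
rewrite mulmx_sumr mulmx_suml; apply: eq_bigr => l _.
by rewrite -scalemxAr -scalemxAl.
Qed.

Lemma rc_sum (I : Type) (r : seq I) (P : pred I) (F : I -> R) :
  (\sum_(i <- r | P i) F i)%:C = \sum_(i <- r | P i) (F i)%:C.
Proof. exact: raddf_sum. Qed.

Lemma rcM (a b : R) : (a * b)%:C = a%:C * b%:C.
Proof. exact: rmorphM. Qed.

Section Assemb.
Variables (n : nat) (X A : finType).

Lemma JM_of k (G : 'I_k -> 'M[C]_n) (p : X -> 'I_k -> A -> R) :
  (forall l, psd (G l)) -> \sum_(l < k) G l = 1%:M -> cond_prob p ->
  is_JM (fun x a => \sum_(l < k) (p x l a)%:C *: G l).
Proof.
move=> hG sG [p0 p1]; split; last by exists k, G, p.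
split=> [x a|x]; first by apply: psd_sum => l _; apply: psdZ.
rewrite exchange_big /= -sG; apply: eq_bigr => l _.
by rewrite -scaler_suml -rc_sum p1 scale1r.
Qed.

Lemma JM_sandwich (S rho : 'M[C]_n) (D : X -> A -> 'M[C]_n) :
  psd S -> S *m S = rho -> \tr rho = 1 -> is_JM D ->
  is_LHS (fun x a => S *m D x a *m S) rho.
Proof.
move=> hS eS tr1 [[Dpsd Dsum] [k [G [p [Gpsd [Gsum [[p0 p1] Dec]]]]]]].
have hSh := psd_herm hS.
have Gp : forall l, psd (S *m G l *m S).
  by move=> l; rewrite -{1}hSh; exact: psd_congr.
have rhop : psd rho by rewrite -eS -{1}hSh; exact: psd_AA.
split.
  split; first by move=> x a; rewrite -{1}hSh; exact: psd_congr.
  split=> // x; by rewrite -mulmx_suml -mulmx_sumr Dsum mulmx1 eS.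
pose q l := complex.Re (\tr (S *m G l *m S)).
have qE : forall l, \tr (S *m G l *m S) = (q l)%:C /\ 0 <= q l.
  by move=> l; exact: nonneg_tr (Gp l).
exists k, q, p, (fun l => if q l == 0 then rho else ((q l)^-1)%:C *: (S *m G l *m S)).
split; first by move=> l; case: (qE l).
split.
  apply: complexI; rewrite rc_sum.
  have -> : \sum_(l < k) (q l)%:C = \sum_(l < k) \tr (S *m G l *m S).
    by apply: eq_bigr => l _; case: (qE l).
  rewrite -raddf_sum -mulmx_suml -mulmx_sumr Gsum mulmx1 eS; exact: tr1.
split; first by [].
split.
  move=> l; case: eqP => ql; first by [].
  have [tE q0] := qE l.
  split; first by apply: psdZ => //; rewrite invr_ge0.
  rewrite mxtraceZ tE -rcM mulVf //; exact/eqP.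
move=> x a; rewrite Dec sandwich_sum; apply: eq_bigr => l _.
have [tE q0] := qE l.
case: eqP => ql.
  have [_ z] := psd_tr (Gp l).
  have z0 : S *m G l *m S = 0 by apply: z; rewrite tE ql.
  by rewrite z0 scaler0 ql mul0r scale0r.
by rewrite scalerA -rcM [q l * _]mulrC mulfK //; exact/eqP.
Qed.


Lemma LHS_unsandwich (S rho : 'M[C]_n) (tau : X -> A -> 'M[C]_n) :
  psd S -> S *m S = rho -> S \in unitmx -> is_LHS tau rho ->
  is_JM (fun x a => invmx S *m tau x a *m invmx S).
Proof.
move=> hS eS uS [[tpsd [tsum tr1]] [k [q [p [rl [q0 [qs [[p0 p1] [rld dec]]]]]]]]].
set Si := invmx S.
have hSi : adjm Si = Si by rewrite adjm_inv psd_herm.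
have SiS : Si *m rho *m Si = 1%:M.
  by rewrite -eS mulmxA mulVmx // mul1mx mulmxV.
case: (pselect (exists x : X, True)) => [[x0 _]|nX]; last first.
  split.
    by split=> x; exfalso; apply: nX; exists x.
  exists 1%N, (fun _ => 1%:M), (fun _ _ _ => 0).
  split; first by move=> l; rewrite -{1}(mulmx1 1%:M) -{1}adjm1; exact: psd_AA.
  split; first by rewrite big_ord1.
  by split; [split=> x; exfalso; apply: nX; exists x|move=> x; exfalso; apply: nX; exists x].
pose G l := (q l)%:C *: (Si *m rl l *m Si).
have Gp : forall l, psd (G l).
  move=> l; apply: psdZ => //; rewrite -{1}hSi; apply: psd_congr; by case: (rld l).
have sq : \sum_(l < k) (q l)%:C *: rl l = rho.
  rewrite -(tsum x0) (eq_bigr _ (fun a _ => dec x0 a)) exchange_big /=.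
  apply: eq_bigr => l _.
  under eq_bigr do rewrite rcM -scalerA.
  by rewrite -scaler_sumr -scaler_suml -rc_sum p1 scale1r.
have Gs : \sum_(l < k) G l = 1%:M.
  by rewrite -SiS -sq sandwich_sum.
have := JM_of Gp Gs (conj p0 p1).
suff -> : (fun x a => Si *m tau x a *m Si) =
          (fun x a => \sum_(l < k) (p x l a)%:C *: G l) by [].
apply: funext => x; apply: funext => a.
rewrite dec sandwich_sum; apply: eq_bigr => l _.
by rewrite /G scalerA -rcM mulrC.
Qed.

End Assemb.


Definition IRset n (X A : finType) (M : X -> A -> 'M[C]_n) : R -> Prop :=
  (fun t : R => 0 <= t /\
    exists D' D : X -> A -> 'M[C]_n, is_JM D' /\ is_JM D /\
      forall x a, ((1 + t)^-1)%:C *: (M x a + t%:C *: D' x a) = D x a).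

Definition SRset n (X A : finType) (sig : X -> A -> 'M[C]_n) (rho : 'M[C]_n) : R -> Prop :=
  (fun t : R => 0 <= t /\
    exists tau' tau : X -> A -> 'M[C]_n, is_LHS tau' rho /\ is_LHS tau rho /\
      forall x a, ((1 + t)^-1)%:C *: (sig x a + t%:C *: tau' x a) = tau x a).

Lemma IRE n (X A : finType) (M : X -> A -> 'M[C]_n) : IR_JM M = inf (IRset M).
Proof. by []. Qed.

Lemma SRE n (X A : finType) (sig : X -> A -> 'M[C]_n) rho :
  SR_CLHS sig rho = inf (SRset sig rho).
Proof. by []. Qed.

Lemma inf_mono (E F : R -> Prop) : (exists t, E t) -> (forall t, F t -> 0 <= t) ->
  (forall t, E t -> F t) -> inf F <= inf E.
Proof.
move=> [t0 Et0] F0 EF; apply: lb_le_inf; first by exists t0.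
move=> t Et; apply: ge_inf; last exact: EF.
by exists 0 => y Fy; exact: F0.
Qed.

Lemma sand_lin n (S T M N : 'M[C]_n) (c d : C) :
  S *m (c *: (M + d *: N)) *m T = c *: (S *m M *m T + d *: (S *m N *m T)).
Proof.
by rewrite -scalemxAr -scalemxAl mulmxDr mulmxDl -scalemxAr -scalemxAl.
Qed.

Section Main.
Variables (n : nat) (X A : finType) (B : X -> A -> 'M[C]_n).

Lemma IR_SR rho t : density rho -> IRset B t -> SRset (sandwich rho B) rho t.
Proof.
move=> [rp tr1] [t0 [D' [D [jD' [jD eq]]]]].
have [hS eS] := psd_sqrt_spec rp.
split=> //; exists (fun x a => psd_sqrt rho *m D' x a *m psd_sqrt rho).
exists (fun x a => psd_sqrt rho *m D x a *m psd_sqrt rho).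
split; first exact: JM_sandwich.
split; first exact: JM_sandwich.
by move=> x a; rewrite -eq sand_lin.
Qed.

Lemma SR_IR rho t : density rho -> \rank rho = n ->
  SRset (sandwich rho B) rho t -> IRset B t.
Proof.
move=> [rp tr1] rk [t0 [tau' [tau [l' [l eq]]]]].
have [hS eS] := psd_sqrt_spec rp.
set S := psd_sqrt rho in hS eS eq.
have uS : S \in unitmx.
  have : rho \in unitmx by rewrite -row_free_unit /row_free rk.
  by rewrite -eS unitmx_mul => /andP[].
split=> //; exists (fun x a => invmx S *m tau' x a *m invmx S).
exists (fun x a => invmx S *m tau x a *m invmx S).
split; first exact: LHS_unsandwich l'.
split; first exact: LHS_unsandwich l.
move=> x a; rewrite -eq sand_lin /sandwich -/S.
by rewrite !mulmxA mulVmx // mul1mx mulmxK.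
Qed.


Lemma psd1 : psd (1%:M : 'M[C]_n).
Proof. rewrite -{1}(mulmx1 1%:M) -{1}adjm1; exact: psd_AA. Qed.

Lemma JM_emptyX (M : X -> A -> 'M[C]_n) : ~ (exists x : X, True) -> is_JM M.
Proof.
move=> nX; split; first by split=> x; exfalso; apply: nX; exists x.
exists 1%N, (fun _ => 1%:M), (fun _ _ _ => 0).
split; first by move=> _; exact: psd1.
split; first by rewrite big_ord1.
by split; [split=> x; exfalso; apply: nX; exists x|move=> x; exfalso; apply: nX; exists x].
Qed.

Lemma sum_delta (b : A) : \sum_a ((a == b)%:R : R) = 1.
Proof.
rewrite (bigD1 b) //= eqxx big1 ?addr0 // => a /negbTE -> //.
Qed.

End Main.

Lemma sum_ev (V : nmodType) (T : finType) (F : T -> V) :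
  \sum_(i < #|{: T}|) F (enum_val i) = \sum_z F z.
Proof. by rewrite -big_enum_val; apply: eq_bigl => z; rewrite inE. Qed.

Lemma IR_nonempty n (X A : finType) (B : X -> A -> 'M[C]_n.+1) :
  is_MA B -> exists t, IRset B t.
Proof.
move=> [Bpsd Bsum].
case: (pselect (exists x : X, True)) => [[x0 _]|nX]; last first.
  exists 0; split => //; exists B, B; split; first exact: JM_emptyX.
  split; first exact: JM_emptyX.
  by move=> x; exfalso; apply: nX; exists x.
have [a0 _] : exists a : A, True.
  case: (pselect (exists a : A, True)) => // nA.
  have : \sum_a B x0 a = 0 by apply: big1 => a _; exfalso; apply: nA; exists a.
  rewrite Bsum => /matrixP /(_ ord0 ord0); rewrite !mxE eqxx /= => /eqP.
  by rewrite oner_eq0.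
pose m := #|X|.
have m0 : (0 < m)%N by apply/card_gt0P; exists x0.
pose mR := (m%:R : R).
have mR0 : mR != 0 by rewrite pnatr_eq0 -lt0n.
pose ev : 'I_#|{: X * A}| -> X * A := enum_val.
pose G l := (mR^-1)%:C *: B (ev l).1 (ev l).2.
pose p x l a := if (ev l).1 == x then ((a == (ev l).2)%:R : R) else ((a == a0)%:R).
have Gp : forall l, psd (G l).
  by move=> l; apply: psdZ => //; rewrite invr_ge0 ler0n.
have Gs : \sum_l G l = 1%:M.
  rewrite -scaler_sumr (sum_ev (fun z => B z.1 z.2)).
  have -> : \sum_(z : X * A) B z.1 z.2 = \sum_y \sum_b B y b.
    by rewrite pair_big; apply: eq_bigl.
  rewrite (eq_bigr (fun _ => 1%:M)) ?sumr_const; last by move=> y _; exact: Bsum.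
  rewrite -scaler_nat scalerA -(rmorph_nat (real_complex R)) -rcM mulVf //.
  by rewrite scale1r.
have pc : cond_prob p.
  split; first by move=> x l a; rewrite /p; case: ifP => _; exact: ler0n.
  by move=> x l; rewrite /p; case: ((ev l).1 == x); rewrite sum_delta.
have pc' : cond_prob (fun (x : X) (l : 'I_1) (a : A) => ((a == a0)%:R : R)).
  by split=> [x l a|x l]; [exact: ler0n|rewrite sum_delta].
have J := JM_of Gp Gs pc.
have J' := JM_of (fun _ => psd1 n.+1) (big_ord1 _ (fun _ => 1%:M)) pc'.
exists (m.-1)%:R; split; first exact: ler0n.
eexists; eexists; split; first exact: J'.
split; first exact: J.
move=> x a /=.
rewrite big_ord1.
set K := (((a == a0)%:R : R))%:C *: (1%:M : 'M[C]_n.+1).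
have e1 : (1 : R) + (m.-1)%:R = mR by rewrite /mR -{2}(prednK m0) -natr1 addrC.
have e2 : ((m.-1)%:R)%:C *: K = K *+ m.-1.
  by rewrite (rmorph_nat (real_complex R)) scaler_nat.
have e3 : \sum_l (p x l a)%:C *: G l =
    (mR^-1)%:C *: \sum_l (p x l a)%:C *: B (ev l).1 (ev l).2.
  by rewrite scaler_sumr; apply: eq_bigr => l _; rewrite /G !scalerA mulrC.
rewrite e1 e2 e3; congr (_ *: _).
rewrite (sum_ev (fun z => (if z.1 == x then ((a == z.2)%:R : R) else ((a == a0)%:R))%:C *: B z.1 z.2)).
rewrite -(pair_big xpredT xpredT (fun y b => (if y == x then ((a == b)%:R : R) else ((a == a0)%:R))%:C *: B y b)) /=.
rewrite (bigD1 x) //= eqxx.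
have -> : \sum_j ((a == j)%:R : R)%:C *: B x j = B x a.
  rewrite (bigD1 a) //= eqxx scale1r big1 ?addr0 // => b ba.
  by rewrite eq_sym (negbTE ba) scale0r.
congr (_ + _).
rewrite (eq_bigr (fun _ => K)); last first.
  by move=> y yx; rewrite (negbTE yx) -scaler_sumr Bsum.
by rewrite sumr_const cardC1.
Qed.

Lemma full_density n : exists rho : 'M[C]_n.+1, density rho /\ \rank rho = n.+1.
Proof.
pose c : R := (n.+1%:R)^-1.
have c0 : c != 0 by rewrite invr_eq0 pnatr_eq0.
exists (c%:C *: 1%:M); split.
  split; first by apply: psdZ; [rewrite invr_ge0 ler0n|exact: psd1].
  rewrite mxtraceZ mxtrace1 -(rmorph_nat (real_complex R)) -rcM mulVf //.
  by rewrite pnatr_eq0.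
apply: mxrank_unit; rewrite scalemx1 unitmxE det_scalar unitrX // unitfE.
by rewrite fmorph_eq0.
Qed.

End Q.

Theorem lemma1 (R : realType) (n : nat) (X A : finType)
    (B : X -> A -> 'M[R[i]]_n.+1) :
  is_MA B ->
  (forall rho : 'M[R[i]]_n.+1, density rho ->
     SR_CLHS (sandwich rho B) rho <= IR_JM B) /\
  (exists rho : 'M[R[i]]_n.+1, density rho /\
     SR_CLHS (sandwich rho B) rho = IR_JM B) /\
  (forall rho : 'M[R[i]]_n.+1, density rho -> \rank rho = n.+1 ->
     SR_CLHS (sandwich rho B) rho = IR_JM B).
Proof.
move=> hB.
have [t0 It0] := IR_nonempty hB.
have part1 : forall rho : 'M[R[i]]_n.+1, density rho ->
     SR_CLHS (sandwich rho B) rho <= IR_JM B.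
  move=> rho dr; rewrite SRE IRE; apply: inf_mono.
  - by exists t0.
  - by move=> t [].
  - by move=> t; exact: IR_SR.
have part3 : forall rho : 'M[R[i]]_n.+1, density rho -> \rank rho = n.+1 ->
     SR_CLHS (sandwich rho B) rho = IR_JM B.
  move=> rho dr rk; apply/eqP; rewrite Order.POrderTheory.eq_le part1 //=.
  rewrite SRE IRE; apply: inf_mono.
  - by exists t0; exact: IR_SR.
  - by move=> t [].
  - by move=> t; exact: SR_IR.
split=> //; split=> //.
have [rho [dr rk]] := full_density R n.
by exists rho; split=> //; exact: part3.
Qed.
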